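(* Let $\alpha,\beta$ be real (or complex) parameters and let $n,k$ be non-negative integers. Then $$\genfrac{\lfloor}{\rfloor}{0pt}{}{n}{k}^{\alpha,\beta}=\sum_{j=0}^{n-k}(-1)^{j}\,\big((k+1)\beta+n\alpha\,|\,\beta\big)^{\overline{j}}\,\genfrac{\lfloor}{\rfloor}{0pt}{}{n+1}{k+j+1}^{\alpha,\beta},$$ where $(y|\theta)^{\overline{j}}=y(y+\theta)\cdots(y+(j-1)\theta)$ and $(y|\theta)^{\overline{0}}=1$; that is, $\big((k+1)\beta+n\alpha\,|\,\beta\big)^{\overline{j}}=\prod_{i=1}^{j}\big(n\alpha+(k+i)\beta\big)$.
   Context: For parameters $\alpha,\beta$, the generalized Stirling numbers $\genfrac{\lfloor}{\rfloor}{0pt}{}{n}{k}^{\alpha,\beta}$, $0\le k\le n$, are defined by the polynomial identity in $x$ $$x(x+\alpha)\cdots(x+(n-1)\alpha)=\sum_{k=0}^{n}\genfrac{\lfloor}{\rfloor}{0pt}{}{n}{k}^{\alpha,\beta}\,x(x-\beta)\cdots(x-(k-1)\beta),$$ (empty products equal $1$), and $\genfrac{\lfloor}{\rfloor}{0pt}{}{n}{k}^{\alpha,\beta}=0$ for $k<0$ or $k>n$. *)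

(* Defs.v *)
From HB Require Import structures.
From mathcomp Require Import all_boot all_order all_algebra.
Set Implicit Arguments. Unset Strict Implicit. Unset Printing Implicit Defensive.
Import GRing.Theory.
Local Open Scope ring_scope.

Definition rising (R : comRingType) (y theta : R) (j : nat) : R :=
  \prod_(i < j) (y + i%:R * theta).

Definition is_gen_stirling (R : comRingType) (alpha beta : R)
    (S : nat -> nat -> R) : Prop :=
  (forall n : nat,
     \prod_(i < n) ('X + (i%:R * alpha)%:P) =
     \sum_(k < n.+1) S n k *: \prod_(i < k) ('X - (i%:R * beta)%:P))
  /\ (forall n k : nat, (n < k)%N -> S n k = 0).

(* Main.v *)
Require Import Defs.
From HB Require Import structures.
From mathcomp Require Import all_boot all_order all_algebra.
From mathcomp Require Import ring zify.
Import GRing.Theory.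
Local Open Scope ring_scope.

Section S.
Variables (R : fieldType) (beta : R).

Definition FF (k : nat) : {poly R} := \prod_(i < k) ('X - (i%:R * beta)%:P).

Lemma FF_monic k : FF k \is monic.
Proof. exact: monic_prod_XsubC. Qed.

Lemma FF_size k : size (FF k) = k.+1.
Proof. by rewrite /FF size_prod_XsubC; have := size_enum_ord k; rewrite enumT => ->. Qed.

Lemma FF_S k : FF k.+1 = FF k * ('X - (k%:R * beta)%:P).
Proof. by rewrite /FF big_ord_recr. Qed.

Lemma FF_indep N (c : nat -> R) :
  \sum_(k < N) c k *: FF k = 0 -> forall k, (k < N)%N -> c k = 0.
Proof.
elim: N => [|N IH] H k Hk //.
move: H; rewrite big_ord_recr /= => H.
have cN : c N = 0.
  have := congr1 (fun p : {poly R} => p`_N) H.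
  rewrite coef0 coefD coefZ coef_sum big1 ?add0r.
    by have := FF_monic N => /monicP; rewrite lead_coefE FF_size /= => ->; rewrite mulr1.
  move=> i _; rewrite coefZ nth_default ?mulr0 // FF_size.
  exact: ltn_ord.
move: H; rewrite cN scale0r addr0 => H.
case: (ltnP k N) => hk; first exact: IH.
by have -> : k = N by apply/eqP; rewrite eqn_leq hk -ltnS Hk.
Qed.

End S.
Arguments FF {R}.
Arguments FF_indep {R beta N c}.

Lemma rec_stirling (R : fieldType) (alpha beta : R) (S : nat -> nat -> R)
    (hS : is_gen_stirling alpha beta S) (n m : nat) :
  S n.+1 m.+1 = S n m + (m.+1%:R * beta + n%:R * alpha) * S n m.+1.
Proof.
case: hS => hP hZ.
set d := fun k : nat => (if k is m.+1 then S n m else 0) + S n k * (k%:R * beta + n%:R * alpha).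
have Hs : \sum_(k < n.+1) S n k *: FF beta k * ('X + (n%:R * alpha)%:P)
          = \sum_(k < n.+2) d k *: FF beta k.
  rewrite /d (eq_bigr (fun k : 'I_n.+2 => (if (k:nat) is m.+1 then S n m else 0) *: FF beta k
              + (S n k * (k%:R * beta + n%:R * alpha)) *: FF beta k));
    last by move=> i _; rewrite scalerDl.
  rewrite big_split /= [X in _ = X + _]big_ord_recl /= scale0r add0r.
  rewrite [X in _ = _ + X]big_ord_recr /= (hZ n n.+1) // mul0r scale0r addr0.
  rewrite -big_split /=; apply: eq_bigr => i _.
  rewrite /bump /= add1n FF_S -!scalerAl -scalerA -scalerDr; congr (_ *: _).
  have -> : 'X + (n%:R * alpha)%:P =
     ('X - ((i:nat)%:R * beta)%:P) + ((i:nat)%:R * beta + n%:R * alpha)%:P.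
    by rewrite polyCD addrA subrK.
  by rewrite mulrDr -mul_polyC [_%:P * FF _ _]mulrC.
have E : \sum_(k < n.+2) (S n.+1 k - d k) *: FF beta k = 0.
  rewrite (eq_bigr (fun k : 'I_n.+2 => S n.+1 k *: FF beta k - d k *: FF beta k));
    last by move=> i _; rewrite scalerBl.
  rewrite sumrB -Hs -hP big_ord_recr /= hP mulr_suml subrr //.
have := @FF_indep _ _ _ (fun k => S n.+1 k - d k) E.
case: (ltnP m.+1 n.+2) => hm.
  move=> /(_ m.+1 hm) /eqP; rewrite subr_eq0 /d => /eqP ->.
  by rewrite mulrC.
move=> _.
rewrite !hZ ?mulr0 ?addr0 //; lia.
Qed.

Lemma rec2 (R : fieldType) (alpha beta : R) (S : nat -> nat -> R)
    (hS : is_gen_stirling alpha beta S) (n m : nat) :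
  S n m = S n.+1 m.+1 - (m.+1%:R * beta + n%:R * alpha) * S n m.+1.
Proof. by rewrite (rec_stirling _ _ _ _ hS) addrK. Qed.

Theorem theorem4 (R : fieldType) (alpha beta : R) (S : nat -> nat -> R)
    (hS : is_gen_stirling alpha beta S) (n k : nat) :
  S n k =
  \sum_(j < (n - k).+1)
     (-1) ^+ j * rising (k.+1%:R * beta + n%:R * alpha) beta j * S n.+1 (k + j).+1.
Proof.
set y := k.+1%:R * beta + n%:R * alpha.
have G : forall J, S n k = \sum_(j < J)
     (-1) ^+ j * rising y beta j * S n.+1 (k + j).+1
     + (-1) ^+ J * rising y beta J * S n (k + J).
  elim=> [|J IH]; first by rewrite big_ord0 /rising big_ord0 expr0 !mul1r add0r addr0.
  rewrite big_ord_recr /= IH -addrA; congr (_ + _).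
  rewrite (rec2 _ _ _ _ hS n (k + J)) /rising big_ord_recr /=.
  have -> : k + J.+1 = (k + J).+1 by exact: addnS.
  have -> : y + J%:R * beta = (k + J).+1%:R * beta + n%:R * alpha.
    by rewrite /y -[(k + J).+1]/((k + J).+1)%N -addnS natrD mulrDl; ring.
  rewrite exprS; ring.
rewrite [LHS](G (n - k).+1) (proj2 hS n) ?mulr0 ?addr0 //.
by change (n < addn k (n - k)%N.+1)%N; lia.
Qed.
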